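(* Let $T$ be a tree. Then (1) $\chi_{ei}(T)=1$ if and only if $\operatorname{diam}(T)\le 2$; and (2) $\chi_{ei}(T)=2$ if and only if $\operatorname{diam}(T)\ge 3$.
   Context: All graphs are finite and simple. A path $P_4$ in $G$ is a sequence $uxyv$ of four distinct vertices with $ux,xy,yv\in E(G)$; $u$ and $v$ are its end vertices. An $e$-injective $k$-coloring of a graph $G$ is a function $f:V(G)\to\{1,\dots,k\}$ such that $f(u)\ne f(v)$ whenever $u$ and $v$ are the end vertices of some path $P_4=uxyv$ in $G$ (the coloring need not be proper). The $e$-injective chromatic number $\chi_{ei}(G)$ is the minimum positive integer $k$ such that $G$ has an $e$-injective $k$-coloring. $\operatorname{diam}(T)$ denotes the diameter of $T$. *)

(* Defs.v *)
From mathcomp Require Import all_boot.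
Set Implicit Arguments. Unset Strict Implicit. Unset Printing Implicit Defensive.

Definition simple_graph (T : finType) (e : rel T) : Prop :=
  symmetric e /\ irreflexive e.

Definition is_tree (T : finType) (e : rel T) : Prop :=
  [/\ simple_graph e, 0 < #|T|,
      (forall x y : T, connect e x y) &
      (forall p : seq T, uniq p -> 3 <= size p -> ~~ cycle e p)].

Definition walk_of_len (T : finType) (e : rel T) (n : nat) (x y : T) : bool :=
  [exists p : n.-tuple T, path e x p && (last x p == y)].

(* Distance: least length of a walk from x to y (= #|T| if none exists,
   which never happens in a connected graph since shortest walks are paths
   with fewer than #|T| edges). *)
Definition dist (T : finType) (e : rel T) (x y : T) : nat :=
  find (fun n => walk_of_len e n x y) (iota 0 #|T|).

Definition diam (T : finType) (e : rel T) : nat :=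
  \max_(x : T) \max_(y : T) dist e x y.

Definition P4_ends (T : finType) (e : rel T) (u v : T) : Prop :=
  exists x y : T, [/\ uniq [:: u; x; y; v], e u x, e x y & e y v].

Definition ei_coloring (T : finType) (e : rel T) (k : nat) (f : T -> nat) : Prop :=
  (forall v, 1 <= f v <= k) /\ (forall u v, P4_ends e u v -> f u <> f v).

Definition chi_ei_is (T : finType) (e : rel T) (k : nat) : Prop :=
  [/\ 0 < k, (exists f, ei_coloring e k f) &
      (forall j, 0 < j -> (exists f, ei_coloring e j f) -> k <= j)].

(* Main.v *)
Require Import Defs.
From mathcomp Require Import all_boot.
From mathcomp Require Import zify.
Set Implicit Arguments. Unset Strict Implicit. Unset Printing Implicit Defensive.

Lemma walkP (T : finType) (e : rel T) n x y :
  walk_of_len e n x y <-> exists s : seq T, [/\ size s = n, path e x s & last x s = y].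
Proof.
split.
- case/existsP => p /andP [Hp /eqP Hl]. exists (tval p). by rewrite size_tuple.
- case=> s [Hs Hp Hl]. apply/existsP. have Hs' : size s == n by rewrite Hs.
  exists (Tuple Hs'). by rewrite /= Hp Hl eqxx.
Qed.

Lemma find_iota_le (P : pred nat) N k : P k -> k < N -> find P (iota 0 N) <= k.
Proof.
move=> Pk kN. rewrite leqNgt; apply/negP => H.
have := before_find 0 H. by rewrite nth_iota ?add0n ?Pk.
Qed.

Lemma upath (T : finType) (e : rel T) x y : connect e x y ->
  exists p, [/\ path e x p, uniq (x::p), last x p = y & size p < #|T|].
Proof.
case/connectP => p Hp ->. case: (shortenP Hp) => p' Hp' Hu _. exists p'; split => //.
have := max_card (mem (x :: p')). by rewrite (card_uniqP Hu).
Qed.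

Lemma dist_walk (T : finType) (e : rel T) x y : connect e x y ->
  walk_of_len e (dist e x y) x y /\
  (forall k, k < #|T| -> walk_of_len e k x y -> dist e x y <= k).
Proof.
move=> Hc. split; last first.
  by move=> k Hk Hw; rewrite /dist; apply: find_iota_le.
have [p [Hp Hu Hl Hs]] := upath Hc.
have Hw : walk_of_len e (size p) x y by apply/walkP; exists p.
have Hh : has (fun n => walk_of_len e n x y) (iota 0 #|T|).
  by apply/hasP; exists (size p); rewrite ?mem_iota.
have := nth_find 0 Hh. rewrite nth_iota ?add0n //.
by rewrite -{2}(size_iota 0 #|T|) -has_find.
Qed.

Lemma P4_diam (T : finType) (e : rel T) : is_tree e ->
  (exists u v, P4_ends e u v) <-> 3 <= diam e.
Proof.
case=> [[Hsym Hirr] Hcard Hconn Hacyc]. split.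
- case=> u [v [x [y [Hu Hux Hxy Hyv]]]].
  have Hd : dist e u v <= diam e.
    rewrite /diam; apply: (leq_trans _ (leq_bigmax u)). exact: (@leq_bigmax _ (fun y => dist e u y) v).
  apply: leq_trans Hd. rewrite leqNgt; apply/negP => H.
  have [/walkP [s [Hs Hp Hl]] _] := dist_walk (Hconn u v).
  rewrite -Hs in H; move: Hu Hp Hl {Hs}.
  case: s H => [|a [|b [|c s]]] //= _.
  + move=> Hu _ Huv. by move: Hu; rewrite Huv /= !inE eqxx /= !orbT.
  + move=> Hu /andP [Hua _] Hav. subst a.
    have := Hacyc [:: u; x; y; v] Hu isT. by rewrite /= Hux Hxy Hyv (Hsym v u) Hua.
  + move=> Hu /andP [Hua /andP [Hab _]] Hbv. subst b.
    case: (eqVneq a x) => [Eax|Nax].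
      subst a. have := Hacyc [:: x; y; v]. rewrite /= Hxy Hyv (Hsym v x) Hab /=.
      move: Hu => /= /andP [_ ->]. by move/(_ isT isT).
    move: Hu; rewrite /= !inE !negb_or => /and4P [/and3P [h1 h2 h3] /andP [h4 h5] h6 _].
    case: (eqVneq a y) => [Eay|Nay].
      subst a. have := Hacyc [:: u; x; y]. rewrite /= Hxy Hux (Hsym y u) Hua /=.
      rewrite !in_cons !in_nil !orbF !negb_or h1 h2 h4 /=. by move/(_ isT isT).
    have Nau : a != u by apply/eqP => E; subst a; rewrite Hirr in Hua.
    have Nav : a != v by apply/eqP => E; subst a; rewrite Hirr in Hab.
    have := Hacyc [:: u; x; y; v; a]. rewrite /= Hux Hxy Hyv (Hsym v a) Hab (Hsym a u) Hua /=.
    rewrite !in_cons !in_nil !orbF !negb_or h1 h2 h3 h4 h5 h6 !(eq_sym _ a) Nau Nax Nay Nav /=.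
    by move/(_ isT isT).
- move=> Hd.
  have [u [v Huv]] : exists u v, 2 < dist e u v.
    case: (boolP [exists u, exists v, 2 < dist e u v]) => [/existsP [u /existsP [v H]]|H].
      by exists u, v.
    exfalso. move: Hd; rewrite leqNgt => /negP; apply. rewrite ltnS.
    apply/bigmax_leqP => u _; apply/bigmax_leqP => v _.
    rewrite leqNgt; apply/negP => H'. move/negP: H; apply.
    by apply/existsP; exists u; apply/existsP; exists v.
  have [p [Hp Hu Hl Hs]] := upath (Hconn u v).
  have [_ Hmin] := dist_walk (Hconn u v).
  have Hw : walk_of_len e (size p) u v by apply/walkP; exists p.
  have := Hmin _ Hs Hw. have Hu4 := take_uniq 4 Hu. move: Hp Hu Hl Hu4.
  case: p {Hs Hw} => [|a [|b [|c q]]] /=; try by move=> *; lia.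
  move=> /and4P [Hua Hab Hbc _] _ _ Hu4 _. exists u, c, a, b. by move: Hu4; rewrite take0.
Qed.

Lemma dup_split (T : eqType) (s : seq T) : ~~ uniq s ->
  exists x s0 s1 s2, s = s0 ++ x :: s1 ++ x :: s2.
Proof.
elim: s => [|y t IH] //=. case Hy: (y \in t) => /=.
- move=> _. case/splitPr: Hy => s1 s2. by exists y, [::], s1, s2.
- move=> /IH [x [s0 [s1 [s2 ->]]]]. by exists x, (y::s0), s1, s2.
Qed.

Lemma odd_cycle (T : finType) (e : rel T) : irreflexive e -> forall n s,
  size s <= n -> cycle e s -> odd (size s) ->
  exists q, [/\ uniq q, 3 <= size q & cycle e q].
Proof.
move=> Hirr. elim=> [|n IH] s.
  by rewrite leqn0 => /eqP /size0nil ->.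
move=> Hn Hc Ho. case: (boolP (uniq s)) => Hu.
  exists s; split => //. move: Hc Ho Hu.
  case: s {Hn} => [|a [|b [|c q]]] //=. by rewrite Hirr.
case: (dup_split Hu) => x [s0 [s1 [s2 Es]]].
have Hsz : size s = size (x::s1) + size (x :: s2 ++ s0).
  by rewrite Es /= !size_cat /= !size_cat /=; lia.
move: Hc. rewrite -(rot_cycle (size s0)) Es rot_size_cat /=.
rewrite -cat_rcons -catA cat_rcons rcons_cat /= -cat_rcons cat_path last_rcons.
move=> /andP [H1 H2].
case Ho1: (odd (size (x::s1))).
  apply: (IH (x :: s1)) => //. move: Hn; rewrite Hsz /=; lia.
apply: (IH (x :: s2 ++ s0)) => //.
- move: Hn; rewrite Hsz /=; lia.
- by move: Ho; rewrite Hsz oddD Ho1.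
Qed.

Lemma bip (T : finType) (e : rel T) : is_tree e -> forall r a b,
  e a b -> odd (dist e r a) != odd (dist e r b).
Proof.
case=> [[Hsym Hirr] Hcard Hconn Hacyc] r a b Hab. apply/negP => /eqP Hpar.
have [/walkP [pa [Hsa Hpa Hla]] _] := dist_walk (Hconn r a).
have [/walkP [pb [Hsb Hpb Hlb]] _] := dist_walk (Hconn r b).
have Hc : cycle e (r :: pa ++ rev pb).
  rewrite /= rcons_cat cat_path Hpa /= Hla -rev_cons (lastI r pb) rev_rcons Hlb /= Hab /=.
  rewrite -Hlb rev_path. by rewrite (@eq_path _ _ e) // => z w /=; rewrite Hsym.
have Ho : odd (size (r :: pa ++ rev pb)).
  by rewrite /= size_cat size_rev oddD Hsa Hsb Hpar addbb.
have [q [Hq1 Hq2 Hq3]] := odd_cycle Hirr (leqnn _) Hc Ho.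
by move: (Hacyc q Hq1 Hq2); rewrite Hq3.
Qed.

Theorem proposition2p5 (T : finType) (e : rel T) :
  is_tree e ->
  (chi_ei_is e 1 <-> diam e <= 2) /\ (chi_ei_is e 2 <-> 3 <= diam e).
Proof.
move=> Ht. have HP := P4_diam Ht.
have Hcol2 : exists f, ei_coloring e 2 f.
  case: (Ht) => _ Hcard _ _. case/card_gt0P: Hcard => r _.
  exists (fun v => (odd (dist e r v)).+1); split.
    by move=> v; case: odd.
  move=> u v [x [y [_ Hux Hxy Hyv]]] [].
  move: (bip Ht r Hux) (bip Ht r Hxy) (bip Ht r Hyv).
  by case: (odd (dist e r u)); case: (odd (dist e r x)); case: (odd (dist e r y));
     case: (odd (dist e r v)).
have Hcol1 : (exists f, ei_coloring e 1 f) -> ~ exists u v, P4_ends e u v.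
  move=> [f [Hf Hi]] [u [v H]]. apply: (Hi u v H).
  have := Hf u; have := Hf v. lia.
have Hcol1' : ~ (exists u v, P4_ends e u v) -> exists f, ei_coloring e 1 f.
  move=> H. exists (fun _ => 1); split => // u v H'. by case: H; exists u, v.
split; split.
- case=> _ H _. rewrite leqNgt; apply/negP => /HP. exact: Hcol1.
- move=> Hd. split => //.
    apply: Hcol1' => /HP. lia.
- case=> _ _ Hmin. apply/HP.
  case: (boolP [exists u, exists v, exists x, exists y,
           [&& uniq [:: u; x; y; v], e u x, e x y & e y v]]).
    case/existsP => u /existsP [v /existsP [x /existsP [y /and4P [H1 H2 H3 H4]]]].
    by exists u, v, x, y.
  move=> H. suff : 2 <= 1 by []. apply: (Hmin 1 isT).
  apply: Hcol1' => [[u [v [x [y [H1 H2 H3 H4]]]]]]. move/negP: H; apply.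
  apply/existsP; exists u; apply/existsP; exists v; apply/existsP; exists x;
    apply/existsP; exists y. by rewrite H1 H2 H3 H4.
- move=> /HP Hex. split => //. move=> j Hj Hcj.
  case: (ltnP 1 j) => // Hj1. have Ej : j = 1 by lia. subst j.
  by case: (Hcol1 Hcj).
Qed.
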